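(* Let $\hat A=\sum_{i=1}^p b_i\prod_{j=1}^{l_i}(\hat a^\dagger)^{n_{i,j}}(\hat a)^{m_{i,j}}$ be a single-mode operator, with $b_i\in\mathbb C$ and nonnegative integers $n_{i,j},m_{i,j}$, such that every term contains at most $n$ creation operators in total, i.e. $\sum_{j=1}^{l_i}n_{i,j}\le n$ for all $i$. Then $\hat A$ has approximate operator coherent rank at most $n+1$.
   Context: Single mode with Fock basis $\{|n\rangle\}$, annihilation operator $\hat a=\sum_{n\ge1}\sqrt n|n-1\rangle\langle n|$, creation operator $\hat a^\dagger$. Coherent state $|\alpha\rangle=e^{-|\alpha|^2/2}\sum_n\frac{\alpha^n}{\sqrt{n!}}|n\rangle$. A (possibly unnormalized) state has coherent rank $k$ if it is a superposition of $k$ coherent states; its approximate coherent rank is the smallest $k$ such that for every $\delta>0$ there is a coherent rank $k$ state with fidelity (after normalization) greater than $1-\delta$ to it. An operator $\hat A$ has approximate operator coherent rank $\ell$ iff $\hat A|\alpha\rangle$ has approximate coherent rank at most $\ell$ for every coherent state $|\alpha\rangle$. *)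

(* Defs.v *)
From Stdlib Require Import Reals List Factorial.
From Coquelicot Require Import Coquelicot.
Open Scope R_scope.
Open Scope C_scope.

(* A single-mode (possibly unnormalized) vector, given by its Fock
   coefficients: psi k = <k|psi>. *)
Definition fvec := nat -> C.

(* annihilation operator a = sum_{n>=1} sqrt n |n-1><n| :
   (a psi)_k = sqrt(k+1) psi_(k+1) *)
Definition ann (psi : fvec) : fvec :=
  fun k => RtoC (sqrt (INR (S k))) * psi (S k).

Definition cre (psi : fvec) : fvec :=
  fun k => match k with
           | O => RtoC 0
           | S k' => RtoC (sqrt (INR k)) * psi k'
           end.

(* prod_{j=1}^{l} (a^dag)^{n_j} a^{m_j}, the factor j=1 being leftmost;
   the list stores the pairs (n_j, m_j) in order j = 1..l. *)
Definition monomial (l : list (nat * nat)) (psi : fvec) : fvec :=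
  fold_right (fun nm acc => Nat.iter (fst nm) cre (Nat.iter (snd nm) ann acc)) psi l.

(* A = sum_i b_i prod_j (a^dag)^{n_ij} a^{m_ij}; terms = list of (b_i, [(n_ij,m_ij)]_j) *)
Definition op_of (terms : list (C * list (nat * nat))) (psi : fvec) : fvec :=
  fun k => fold_right (fun t acc => Cplus (Cmult (fst t) (monomial (snd t) psi k)) acc)
                      (RtoC 0) terms.

Definition n_creations (l : list (nat * nat)) : nat := list_sum (map fst l).

Definition coherent (alpha : C) : fvec :=
  fun k => RtoC (exp (- (Cmod alpha ^ 2) / 2)%R) * pow_n alpha k
           / RtoC (sqrt (INR (Factorial.fact k))).

Definition superpos (cs : list (C * C)) : fvec :=
  fun k => fold_right (fun ca acc => Cplus (Cmult (fst ca) (coherent (snd ca) k)) acc)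
                      (RtoC 0) cs.

Definition has_coherent_rank (k : nat) (phi : fvec) : Prop :=
  exists cs : list (C * C), length cs = k /\ phi = superpos cs.

Definition inner (phi psi : fvec) : C :=
  (Series (fun k => Re (Cmult (Cconj (phi k)) (psi k))),
   Series (fun k => Im (Cmult (Cconj (phi k)) (psi k)))).

Definition normsq (phi : fvec) : R := Series (fun k => (Cmod (phi k) ^ 2)%R).

Definition fidelity (psi phi : fvec) : R :=
  (Cmod (inner phi psi) ^ 2 / (normsq phi * normsq psi))%R.

(* Convention: the zero vector (empty superposition, normalization undefined)
   counts as having approximate coherent rank 0. *)
Definition approx_coherent_rank_le (l : nat) (psi : fvec) : Prop :=
  psi = (fun _ => RtoC 0) \/
  exists k : nat, (k <= l)%nat /\
    forall delta : R, (0 < delta)%R ->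
      exists phi : fvec, has_coherent_rank k phi /\ (fidelity psi phi > 1 - delta)%R.

Definition approx_op_coherent_rank_le (l : nat) (A : fvec -> fvec) : Prop :=
  forall alpha : C, approx_coherent_rank_le l (A (coherent alpha)).

(* Main.v *)
Require Import Defs.
From Stdlib Require Import Reals List Lia Lra Psatz Arith FunctionalExtensionality.
From Coquelicot Require Import Coquelicot.
Open Scope R_scope.
Open Scope C_scope.

Fixpoint csum (f : nat -> C) (n : nat) : C :=
  match n with O => RtoC 0 | S m => csum f m + f m end.
Fixpoint rsum (f : nat -> R) (n : nat) : R :=
  match n with O => 0%R | S m => (rsum f m + f m)%R end.

Lemma csum_ext_lt f g n : (forall i, (i < n)%nat -> f i = g i) -> csum f n = csum g n.
Proof. induction n; intros H; simpl; auto. rewrite IHn, H; auto. Qed.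
Lemma csum_ext f g n : (forall i, f i = g i) -> csum f n = csum g n.
Proof. intros; apply csum_ext_lt; auto. Qed.
Lemma rsum_ext_lt f g n : (forall i, (i < n)%nat -> f i = g i) -> rsum f n = rsum g n.
Proof. induction n; intros H; simpl; auto. rewrite IHn, H; auto. Qed.
Lemma csum_shift f n : csum f (S n) = f O + csum (fun i => f (S i)) n.
Proof. induction n; simpl in *. ring. rewrite IHn. simpl. ring. Qed.
Lemma rsum_shift f n : rsum f (S n) = (f O + rsum (fun i => f (S i)) n)%R.
Proof. induction n; simpl in *. ring. rewrite IHn. simpl. ring. Qed.
Lemma csum_add f g n : csum (fun i => f i + g i) n = csum f n + csum g n.
Proof. induction n; simpl. ring. rewrite IHn; ring. Qed.
Lemma csum_scal c f n : csum (fun i => c * f i) n = c * csum f n.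
Proof. induction n; simpl. ring. rewrite IHn; ring. Qed.
Lemma csum_opp f n : csum (fun i => - f i) n = - csum f n.
Proof. induction n; simpl. ring. rewrite IHn; ring. Qed.
Lemma rsum_scal c f n : rsum (fun i => c * f i)%R n = (c * rsum f n)%R.
Proof. induction n; simpl. ring. rewrite IHn; ring. Qed.
Lemma csum_zero (f : nat -> C) n : (forall i, (i < n)%nat -> f i = RtoC 0) -> csum f n = RtoC 0.
Proof. induction n; intros H; simpl; auto. rewrite IHn by (intros; apply H; lia). rewrite H by lia. ring. Qed.
Lemma csum_switch (u : nat -> nat -> C) n m :
  csum (fun i => csum (fun j => u i j) m) n = csum (fun j => csum (fun i => u i j) n) m.
Proof.
  induction n; simpl.
  - symmetry; apply csum_zero; auto.
  - rewrite IHn. rewrite <- csum_add. apply csum_ext. intros; simpl; auto.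
Qed.
Lemma csum_extend (f : nat -> C) n N : (n <= N)%nat -> (forall i, (n <= i)%nat -> f i = RtoC 0) -> csum f N = csum f n.
Proof. intros H Hz. induction H; simpl; auto. rewrite IHle, Hz; auto. ring. Qed.
Lemma csum_indic (x : nat -> C) j n :
  csum (fun m => if Nat.eqb m j then x m else 0) n = if Nat.ltb j n then x j else 0.
Proof.
  induction n; simpl; auto.
  rewrite IHn. destruct (Nat.eqb n j) eqn:E1.
  - apply Nat.eqb_eq in E1; subst. rewrite (proj2 (Nat.ltb_ge j j)) by lia.
    rewrite (proj2 (Nat.ltb_lt j (S j))) by lia. ring.
  - apply Nat.eqb_neq in E1. destruct (Nat.ltb j n) eqn:E2.
    + apply Nat.ltb_lt in E2. rewrite (proj2 (Nat.ltb_lt j (S n))) by lia. ring.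
    + apply Nat.ltb_ge in E2. rewrite (proj2 (Nat.ltb_ge j (S n))) by lia. ring.
Qed.
Lemma rsum_le f g n : (forall i, (i < n)%nat -> f i <= g i) -> rsum f n <= rsum g n.
Proof. induction n; intros H; simpl. lra. specialize (IHn (fun i Hi => H i ltac:(lia))). specialize (H n ltac:(lia)). lra. Qed.
Lemma rsum_nonneg f n : (forall i, 0 <= f i) -> 0 <= rsum f n.
Proof. induction n; intros H; simpl. lra. specialize (IHn H). specialize (H n). lra. Qed.
Lemma Cmod_csum f n : Cmod (csum f n) <= rsum (fun i => Cmod (f i)) n.
Proof. induction n; simpl. rewrite Cmod_0; lra. eapply Rle_trans. apply Cmod_triangle. lra. Qed.
Lemma RtoC_rsum f n : RtoC (rsum f n) = csum (fun i => RtoC (f i)) n.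
Proof. induction n; simpl; auto. rewrite RtoC_plus, IHn; auto. Qed.

Fixpoint binom (n k : nat) : nat :=
  match n, k with
  | _, O => 1%nat
  | O, S _ => O
  | S n', S k' => (binom n' k' + binom n' (S k'))%nat
  end.
Lemma binom_0 n : binom n 0 = 1%nat. Proof. destruct n; auto. Qed.
Lemma binom_S n k : binom (S n) (S k) = (binom n k + binom n (S k))%nat. Proof. reflexivity. Qed.
Lemma binom_gt n k : (n < k)%nat -> binom n k = 0%nat.
Proof. revert k; induction n; intros k H; destruct k; simpl; try lia; auto.
  rewrite !IHn by lia. auto. Qed.
Lemma binom_nn n : binom n n = 1%nat.
Proof. induction n; simpl; auto. rewrite IHn, binom_gt by lia. lia. Qed.
Lemma binom_Sn n : binom (S n) n = S n.
Proof. induction n; auto. rewrite binom_S, IHn, binom_nn. lia. Qed.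

Lemma Cpow_S (x : C) k : x ^ S k = x * x ^ k. Proof. reflexivity. Qed.
Lemma Cpow_mult (x y : C) k : (x * y) ^ k = x ^ k * y ^ k.
Proof. induction k; simpl. ring. rewrite IHk; ring. Qed.
Lemma Cpow_add (x : C) a b : x ^ (a + b) = x ^ a * x ^ b.
Proof. induction a; simpl. ring. rewrite IHa; ring. Qed.

Definition CN (n : nat) : C := RtoC (INR n).
Lemma CN_plus a b : CN (a + b) = CN a + CN b.
Proof. unfold CN. rewrite plus_INR, RtoC_plus. auto. Qed.

Lemma binomial_C (x y : C) k :
  (x + y) ^ k = csum (fun m => CN (binom k m) * x ^ (k - m) * y ^ m) (S k).
Proof.
  induction k.
  - simpl. unfold CN; simpl. ring.
  - rewrite Cpow_S, IHk.
    transitivity (x * csum (fun m => CN (binom k m) * x ^ (k - m) * y ^ m) (S k)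
                 + y * csum (fun m => CN (binom k m) * x ^ (k - m) * y ^ m) (S k)). ring.
    rewrite <- !csum_scal.
    rewrite (csum_shift (fun m => CN (binom (S k) m) * x ^ (S k - m) * y ^ m)).
    rewrite binom_0, Nat.sub_0_r.
    rewrite (csum_ext (fun i => CN (binom (S k) (S i)) * x ^ (S k - S i) * y ^ S i)
      (fun i => CN (binom k i) * x ^ (k - i) * y ^ S i + CN (binom k (S i)) * x ^ (k - i) * y ^ S i)).
    2:{ intros i. rewrite binom_S, CN_plus. simpl (S k - S i)%nat. ring. }
    rewrite csum_add.
    rewrite (csum_ext (fun i => y * (CN (binom k i) * x ^ (k - i) * y ^ i))
                      (fun i => CN (binom k i) * x ^ (k - i) * y ^ S i)) by (intros; rewrite Cpow_S; ring).
    rewrite (csum_shift (fun i => x * _)). rewrite binom_0, Nat.sub_0_r.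
    simpl (csum (fun i => CN (binom k (S i)) * x ^ (k - i) * y ^ S i) (S k)).
    rewrite (binom_gt k (S k)) by lia.
    rewrite (csum_ext_lt (fun i => CN (binom k (S i)) * x ^ (k - i) * y ^ S i)
       (fun i => x * (CN (binom k (S i)) * x ^ (k - S i) * y ^ S i))).
    2:{ intros i Hi. replace (k - i)%nat with (S (k - S i)) by lia. rewrite Cpow_S. ring. }
    rewrite Nat.sub_diag. unfold CN. simpl. ring.
Qed.

Lemma binomial_R (x y : R) k :
  ((x + y) ^ k)%R = rsum (fun m => INR (binom k m) * x ^ (k - m) * y ^ m)%R (S k).
Proof.
  apply RtoC_inj. rewrite RtoC_rsum, RtoC_pow, RtoC_plus, binomial_C.
  apply csum_ext; intros m. rewrite !RtoC_mult, !RtoC_pow. reflexivity.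
Qed.

Definition D (j : nat) (g : nat -> C) : C :=
  csum (fun i => (-1) ^ (j - i) * CN (binom j i) * g i) (S j).

Lemma D_S j g : D (S j) g = D j (fun i => g (S i)) - D j g.
Proof.
  unfold D.
  rewrite (csum_shift (fun i => (-1) ^ (S j - i) * CN (binom (S j) i) * g i)).
  rewrite (csum_ext (fun i => (-1) ^ (S j - S i) * CN (binom (S j) (S i)) * g (S i))
     (fun i => (-1) ^ (j - i) * CN (binom j i) * g (S i) + (-1) ^ (j - i) * CN (binom j (S i)) * g (S i))).
  2:{ intros i. rewrite binom_S, CN_plus. simpl (S j - S i)%nat. ring. }
  rewrite csum_add.
  rewrite (csum_shift (fun i => (-1) ^ (j - i) * CN (binom j i) * g i)).
  simpl (csum (fun i => (-1) ^ (j - i) * CN (binom j (S i)) * g (S i)) (S j)).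
  rewrite (binom_gt j (S j)) by lia.
  rewrite (csum_ext_lt (fun i => (-1) ^ (j - i) * CN (binom j (S i)) * g (S i))
     (fun i => - ((-1) ^ (j - S i) * CN (binom j (S i)) * g (S i)))).
  2:{ intros i Hi. replace (j - i)%nat with (S (j - S i)) by lia. rewrite Cpow_S. ring. }
  rewrite csum_opp.
  rewrite !binom_0, !Nat.sub_0_r. simpl (S j - 0)%nat. rewrite Cpow_S.
  unfold CN; simpl. ring.
Qed.

Lemma D_lin j (c : nat -> C) (g : nat -> nat -> C) n :
  D j (fun i => csum (fun r => c r * g r i) n) = csum (fun r => c r * D j (g r)) n.
Proof.
  unfold D.
  rewrite (csum_ext _ (fun i => csum (fun r => (-1) ^ (j - i) * CN (binom j i) * (c r * g r i)) n)).
  2:{ intros i. rewrite <- csum_scal. reflexivity. }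
  rewrite csum_switch. apply csum_ext. intros r. rewrite <- csum_scal. apply csum_ext. intros; ring.
Qed.

Definition T (j m : nat) : C := D j (fun i => CN i ^ m).

Lemma D_ext j g1 g2 : (forall i, g1 i = g2 i) -> D j g1 = D j g2.
Proof. intros H; unfold D; apply csum_ext; intros; rewrite H; auto. Qed.

Definition Tst (j m : nat) : C := D j (fun i => CN i ^ m).

Lemma CN_S i : CN (S i) = 1 + CN i.
Proof. unfold CN. rewrite S_INR, RtoC_plus. ring. Qed.

Lemma T_S j m : Tst (S j) m = csum (fun r => CN (binom m r) * Tst j r) m.
Proof.
  unfold Tst. rewrite D_S.
  rewrite (D_ext j _ (fun i => csum (fun r => CN (binom m r) * CN i ^ r) (S m))).
  2:{ intros i. rewrite CN_S, binomial_C. apply csum_ext; intros r. rewrite Cpow_1_l. ring. }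
  rewrite (D_lin j (fun r => CN (binom m r)) (fun r i => CN i ^ r)).
  simpl csum at 1. rewrite binom_nn. replace (CN 1) with (RtoC 1) by (unfold CN; simpl; auto). ring.
Qed.

Lemma T_0 m : Tst 0 m = RtoC 0 ^ m.
Proof. unfold Tst, D. simpl. unfold CN. simpl. ring. Qed.

Lemma T_low j m : (m < j)%nat -> Tst j m = RtoC 0.
Proof.
  revert m; induction j; intros m Hm. lia.
  rewrite T_S. apply csum_zero. intros r Hr. rewrite IHj by lia. ring.
Qed.

Lemma T_diag j : Tst j j = CN (fact j).
Proof.
  induction j. rewrite T_0. unfold CN; simpl. ring.
  rewrite T_S. cbn [csum]. rewrite csum_zero.
  2:{ intros r Hr. rewrite T_low by lia. ring. }
  rewrite IHj, binom_Sn. unfold CN. change (fact (S j)) with (S j * fact j)%nat. rewrite mult_INR, RtoC_mult. ring.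
Qed.

Lemma T_bound j m : Cmod (Tst j m) <= INR j ^ m.
Proof.
  revert m; induction j; intros m.
  - rewrite T_0, Cmod_pow, Cmod_0. simpl. lra.
  - rewrite T_S. eapply Rle_trans. apply Cmod_csum.
    eapply Rle_trans with (rsum (fun r => INR (binom m r) * 1 ^ (m - r) * INR j ^ r)%R (S m)).
    + simpl. assert (0 <= INR (binom m m) * 1 ^ (m - m) * INR j ^ m)%R.
      { apply Rmult_le_pos. apply Rmult_le_pos. apply pos_INR. rewrite pow1; lra. apply pow_le, pos_INR. }
      enough (rsum (fun i : nat => Cmod (CN (binom m i) * Tst j i)) m <= rsum (fun r : nat => INR (binom m r) * 1 ^ (m - r) * INR j ^ r)%R m) by lra.
      apply rsum_le. intros r _. rewrite Cmod_mult, pow1, Rmult_1_r. unfold CN. rewrite Cmod_R, Rabs_pos_eq by apply pos_INR.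
      apply Rmult_le_compat_l. apply pos_INR. apply IHj.
    + rewrite <- binomial_R, S_INR. right. f_equal. ring.
Qed.

Lemma csum_sub f g n : csum (fun i => f i - g i) n = csum f n - csum g n.
Proof. induction n; simpl. ring. rewrite IHn; ring. Qed.

Definition Pfd (a : C) (h : R) j k := D j (fun i => (a + RtoC (INR i * h)) ^ k).

Lemma Pfd_expand a h j k :
  Pfd a h j k = csum (fun m => CN (binom k m) * a ^ (k - m) * RtoC h ^ m * Tst j m) (S k).
Proof.
  unfold Pfd.
  rewrite (D_ext j _ (fun i => csum (fun m => (CN (binom k m) * a ^ (k - m) * RtoC h ^ m) * CN i ^ m) (S k))).
  2:{ intros i. rewrite binomial_C. apply csum_ext; intros m. rewrite RtoC_mult, Cpow_mult. unfold CN. ring. }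
  rewrite D_lin. reflexivity.
Qed.

Lemma pow_le1 (h : R) n : 0 <= h <= 1 -> h ^ n <= 1.
Proof. intros H; induction n; simpl. lra. assert (0 <= h ^ n) by (apply pow_le; lra). nra. Qed.

Lemma pow_le_shift (h : R) m p : 0 <= h <= 1 -> (p <= m)%nat -> h ^ m <= h ^ p.
Proof.
  intros Hh Hp. replace m with (p + (m - p))%nat by lia. rewrite pow_add.
  assert (0 <= h ^ p) by (apply pow_le; lra). assert (h ^ (m - p) <= 1) by (apply pow_le1; lra).
  assert (0 <= h ^ (m-p)) by (apply pow_le; lra). nra.
Qed.

Lemma Pfd_err a h j k : 0 < h <= 1 ->
  Cmod (Pfd a h j k - CN (binom k j) * a ^ (k - j) * RtoC h ^ j * CN (fact j))
  <= h ^ (S j) * (Cmod a + INR j) ^ k.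
Proof.
  intros Hh. rewrite Pfd_expand.
  set (X := fun m => CN (binom k m) * a ^ (k - m) * RtoC h ^ j * CN (fact j)).
  assert (HX : CN (binom k j) * a ^ (k - j) * RtoC h ^ j * CN (fact j)
               = csum (fun m => if Nat.eqb m j then X m else RtoC 0) (S k)).
  { rewrite csum_indic. destruct (Nat.ltb j (S k)) eqn:E. reflexivity.
    apply Nat.ltb_ge in E. unfold X. rewrite binom_gt by lia. unfold CN; simpl. ring. }
  rewrite HX, <- csum_sub.
  eapply Rle_trans. apply Cmod_csum.
  eapply Rle_trans with (rsum (fun m => h ^ (S j) * (INR (binom k m) * Cmod a ^ (k - m) * INR j ^ m))%R (S k)).
  - apply rsum_le. intros m _.
    assert (Hnn : 0 <= h ^ (S j) * (INR (binom k m) * Cmod a ^ (k - m) * INR j ^ m)).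
    { apply Rmult_le_pos. apply pow_le; lra. apply Rmult_le_pos. apply Rmult_le_pos. apply pos_INR.
      apply pow_le, Cmod_ge_0. apply pow_le, pos_INR. }
    destruct (lt_eq_lt_dec m j) as [[Hlt|Heq]|Hgt].
    + rewrite T_low by lia. rewrite (proj2 (Nat.eqb_neq m j)) by lia.
      replace (CN (binom k m) * a ^ (k - m) * RtoC h ^ m * RtoC 0 - RtoC 0) with (RtoC 0) by ring.
      rewrite Cmod_0. exact Hnn.
    + subst m. rewrite Nat.eqb_refl, T_diag. unfold X.
      replace (CN (binom k j) * a ^ (k - j) * RtoC h ^ j * CN (fact j) -
               CN (binom k j) * a ^ (k - j) * RtoC h ^ j * CN (fact j)) with (RtoC 0) by ring.
      rewrite Cmod_0. exact Hnn.
    + rewrite (proj2 (Nat.eqb_neq m j)) by lia. replace (CN (binom k m) * a ^ (k - m) * RtoC h ^ m * Tst j m - RtoC 0)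
        with (CN (binom k m) * a ^ (k - m) * RtoC h ^ m * Tst j m) by ring.
      rewrite !Cmod_mult, !Cmod_pow. unfold CN. rewrite !Cmod_R, (Rabs_pos_eq (INR _)) by apply pos_INR.
      rewrite (Rabs_pos_eq h) by lra.
      pose proof (T_bound j m). pose proof (pow_le_shift h m (S j) ltac:(lra) Hgt).
      assert (0 <= INR (binom k m) * Cmod a ^ (k - m)) by (apply Rmult_le_pos; [apply pos_INR| apply pow_le, Cmod_ge_0]).
      assert (0 <= h ^ m) by (apply pow_le; lra).
      assert (0 <= Cmod (Tst j m)) by apply Cmod_ge_0.
      assert (0 <= INR j ^ m) by (apply pow_le, pos_INR).
      apply Rle_trans with (INR (binom k m) * Cmod a ^ (k - m) * (h ^ m * INR j ^ m))%R.
      { rewrite !Rmult_assoc. apply Rmult_le_compat_l. apply pos_INR. apply Rmult_le_compat_l. apply pow_le, Cmod_ge_0.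
        apply Rmult_le_compat_l; lra. }
      assert (0 <= INR (binom k m) * Cmod a ^ (k - m) * INR j ^ m) by (apply Rmult_le_pos; lra).
      replace (INR (binom k m) * Cmod a ^ (k - m) * (h ^ m * INR j ^ m))%R with
        (h ^ m * (INR (binom k m) * Cmod a ^ (k - m) * INR j ^ m))%R by ring.
      apply Rmult_le_compat_r; lra.
  - rewrite rsum_scal, binomial_R. right. reflexivity.
Qed.

Fixpoint ff (k j : nat) : nat :=
  match k, j with
  | _, O => 1%nat
  | O, S _ => O
  | S k', S j' => (S k' * ff k' j')%nat
  end.
Lemma ff_0 k : ff k 0 = 1%nat. Proof. destruct k; auto. Qed.
Lemma ff_pascal k j : ff (S k) (S j) = (ff k (S j) + S j * ff k j)%nat.
Proof.
  revert j; induction k; intros j.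
  - destruct j; simpl; lia.
  - destruct j.
    + simpl. rewrite ff_0. lia.
    + change (ff (S (S k)) (S (S j))) with (S (S k) * ff (S k) (S j))%nat.
      change (ff (S k) (S (S j))) with (S k * ff k (S j))%nat.
      change (ff (S k) (S j)) with (S k * ff k j)%nat.
      pose proof (IHk j) as H. change (ff (S k) (S j)) with (S k * ff k j)%nat in H. nia.
Qed.
Lemma ff_binom k j : ff k j = (binom k j * fact j)%nat.
Proof.
  revert j; induction k; intros j.
  - destruct j; simpl; auto.
  - destruct j. rewrite ff_0, binom_0. simpl; auto.
    rewrite ff_pascal, binom_S, !IHk. change (fact (S j)) with (S j * fact j)%nat. nia.
Qed.
Lemma ff_gt k j : (k < j)%nat -> ff k j = 0%nat.
Proof. intros; rewrite ff_binom, binom_gt; auto. Qed.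

Definition sc (k : nat) : R := (/ sqrt (INR (fact k)))%R.
Lemma sc_pos k : (0 < sc k)%R.
Proof. unfold sc. apply Rinv_0_lt_compat, sqrt_lt_R0. apply lt_0_INR, lt_O_fact. Qed.
Lemma sqrtS_pos k : (0 < sqrt (INR (S k)))%R.
Proof. apply sqrt_lt_R0, lt_0_INR; lia. Qed.
Lemma sc_S k : sc (S k) = (sc k / sqrt (INR (S k)))%R.
Proof.
  unfold sc. change (fact (S k)) with (S k * fact k)%nat. rewrite mult_INR, sqrt_mult by (apply pos_INR).
  pose proof (sqrtS_pos k). assert (0 < sqrt (INR (fact k)))%R by (apply sqrt_lt_R0, lt_0_INR, lt_O_fact).
  field; lra.
Qed.

Definition Ecoef (a : C) : R := exp (- (Cmod a ^ 2) / 2)%R.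

Definition v (a : C) (j : nat) : fvec :=
  fun k => RtoC (Ecoef a * INR (ff k j) * sc k) * a ^ (k - j).

Lemma pow_n_Cpow (x : C) k : pow_n x k = x ^ k.
Proof. induction k; simpl; try rewrite IHk; reflexivity. Qed.

Lemma coherent_v a : coherent a = v a 0.
Proof.
  apply functional_extensionality; intros k. unfold coherent, v. rewrite ff_0, pow_n_Cpow, Nat.sub_0_r.
  unfold Cdiv. rewrite <- RtoC_inv.
  2:{ apply Rgt_not_eq, sqrt_lt_R0, lt_0_INR, lt_O_fact. }
  unfold Ecoef, sc. rewrite !RtoC_mult. simpl INR. ring.
Qed.

Lemma RtoC_neq0 r : r <> 0%R -> RtoC r <> RtoC 0.
Proof. intros H1 H2. apply H1. apply RtoC_inj. exact H2. Qed.

Lemma ann_v a j : ann (v a j) = fun k => a * v a j k + CN j * v a (pred j) k.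
Proof.
  apply functional_extensionality; intros k. unfold ann, v.
  pose proof (sqrtS_pos k) as Hs.
  rewrite sc_S. unfold Rdiv. set (s := sqrt (INR (S k))) in *.
  destruct j.
  - rewrite !ff_0, !Nat.sub_0_r. unfold CN. simpl pred. rewrite Cpow_S.
    rewrite !RtoC_mult, RtoC_inv by lra. simpl INR. field. apply RtoC_neq0; lra.
  - simpl pred. rewrite ff_pascal. simpl (S k - S j)%nat.
    destruct (le_lt_dec (S j) k) as [Hle|Hlt].
    + replace (k - j)%nat with (S (k - S j)) by lia. rewrite Cpow_S.
      unfold CN. rewrite plus_INR, mult_INR, !RtoC_mult, RtoC_plus, !RtoC_mult, RtoC_inv by lra.
      field. apply RtoC_neq0; lra.
    + rewrite (ff_gt k (S j)) by lia.
      unfold CN. rewrite plus_INR, mult_INR, !RtoC_mult, RtoC_plus, !RtoC_mult, RtoC_inv by lra.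
      simpl INR. field. apply RtoC_neq0; lra.
Qed.

Lemma cre_v a j : cre (v a j) = v a (S j).
Proof.
  apply functional_extensionality; intros k. unfold cre, v. destruct k.
  - simpl. rewrite Rmult_0_r, Rmult_0_l. ring.
  - change (ff (S k) (S j)) with (S k * ff k j)%nat. simpl (S k - S j)%nat.
    rewrite sc_S. pose proof (sqrtS_pos k) as Hs.
    rewrite mult_INR. unfold Rdiv.
    rewrite !RtoC_mult, RtoC_inv by lra.
    replace (RtoC (INR (S k))) with (RtoC (sqrt (INR (S k))) * RtoC (sqrt (INR (S k)))).
    2:{ rewrite <- RtoC_mult, sqrt_sqrt; auto. apply pos_INR. }
    set (s := sqrt (INR (S k))) in *.
    field. apply RtoC_neq0; lra.
Qed.

Inductive span (a : C) (N : nat) : fvec -> Prop :=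
| sp_zero : span a N (fun _ => RtoC 0)
| sp_v j : (j < N)%nat -> span a N (v a j)
| sp_add f g : span a N f -> span a N g -> span a N (fun k => f k + g k)
| sp_scal c f : span a N f -> span a N (fun k => c * f k).

Lemma span_mono a N M f : (N <= M)%nat -> span a N f -> span a M f.
Proof. intros H Hs; induction Hs; [apply sp_zero | apply sp_v; lia | apply sp_add; auto | apply sp_scal; auto]. Qed.

Lemma span_ann a N f : span a N f -> span a N (ann f).
Proof.
  intros Hs; induction Hs.
  - replace (ann (fun _ => RtoC 0)) with (fun _ : nat => RtoC 0). constructor.
    apply functional_extensionality; intros k; unfold ann; ring.
  - rewrite ann_v. apply sp_add; apply sp_scal; constructor; lia.
  - replace (ann (fun k => f k + g k)) with (fun k => ann f k + ann g k).
    constructor; auto. apply functional_extensionality; intros k; unfold ann; ring.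
  - replace (ann (fun k => c * f k)) with (fun k => c * ann f k).
    constructor; auto. apply functional_extensionality; intros k; unfold ann; ring.
Qed.

Lemma span_cre a N f : span a N f -> span a (S N) (cre f).
Proof.
  intros Hs; induction Hs.
  - replace (cre (fun _ => RtoC 0)) with (fun _ : nat => RtoC 0). constructor.
    apply functional_extensionality; intros k; unfold cre; destruct k; ring.
  - rewrite cre_v. constructor; lia.
  - replace (cre (fun k => f k + g k)) with (fun k => cre f k + cre g k).
    constructor; auto. apply functional_extensionality; intros k; unfold cre; destruct k; ring.
  - replace (cre (fun k => c * f k)) with (fun k => c * cre f k).
    constructor; auto. apply functional_extensionality; intros k; unfold cre; destruct k; ring.
Qed.

Lemma span_iter_ann a N f m : span a N f -> span a N (Nat.iter m ann f).
Proof. intros H; induction m; simpl; auto. apply span_ann; auto. Qed.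
Lemma span_iter_cre a N f m : span a N f -> span a (m + N) (Nat.iter m cre f).
Proof. intros H; induction m; simpl; auto. apply span_cre; auto. Qed.

Lemma span_monomial a N f l : span a N f -> span a (n_creations l + N) (monomial l f).
Proof.
  intros H; induction l as [|nm l IH]; simpl; auto.
  unfold n_creations in *. simpl.
  eapply span_mono. 2: apply span_iter_cre, span_iter_ann, IH. rewrite Nat.add_assoc; apply le_n.
Qed.

Lemma span_op a terms n :
  (forall t, In t terms -> (n_creations (snd t) <= n)%nat) ->
  span a (S n) (op_of terms (coherent a)).
Proof.
  induction terms as [|t ts IH]; intros H.
  - apply sp_zero.
  - change (op_of (t :: ts) (coherent a)) with
      (fun k => fst t * monomial (snd t) (coherent a) k + op_of ts (coherent a) k).
    apply sp_add.
    + apply sp_scal. specialize (H t (or_introl eq_refl)).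
      apply (span_mono a (n_creations (snd t) + 1)); [lia|]. apply span_monomial.
      rewrite coherent_v. apply sp_v; lia.
    + apply IH. intros; apply H; right; auto.
Qed.

Open Scope R_scope.
Lemma exs_le (a b : nat -> R) : (forall n, Rabs (a n) <= b n) -> ex_series b -> ex_series a.
Proof. intros H Hb. apply (ex_series_le a b); auto. Qed.
Lemma exs_plus (a b : nat -> R) : ex_series a -> ex_series b -> ex_series (fun n => a n + b n).
Proof. intros. apply (ex_series_plus a b); auto. Qed.
Lemma exs_scal (c : R) (a : nat -> R) : ex_series a -> ex_series (fun n => c * a n).
Proof. intros. apply (ex_series_scal_l c a); auto. Qed.
Lemma exs_minus (a b : nat -> R) : ex_series a -> ex_series b -> ex_series (fun n => a n - b n).
Proof. intros. apply (ex_series_minus a b); auto. Qed.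
Lemma Series_zero : Series (fun _ => 0) = 0.
Proof. rewrite (Series_ext _ (fun n => 0 * 0)) by (intros; ring). rewrite Series_scal_l. ring. Qed.
Lemma Series_le_gen (a b : nat -> R) : ex_series a -> ex_series b -> (forall n, a n <= b n) -> Series a <= Series b.
Proof.
  intros Ha Hb H. assert (0 <= Series (fun n => b n - a n)).
  { rewrite <- Series_zero. apply Series_le. intros n; specialize (H n); lra. apply exs_minus; auto. }
  rewrite Series_minus in H0 by auto. lra.
Qed.
Lemma Series_ge_term (a : nat -> R) k0 : ex_series a -> (forall n, 0 <= a n) -> a k0 <= Series a.
Proof.
  intros Ha Hp. rewrite (Series_incr_n a (S k0)) by (auto; lia). simpl pred.
  assert (0 <= Series (fun k => a (S k0 + k)%nat)).
  { rewrite <- Series_zero. apply Series_le. intros; split; [lra| apply Hp].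
    apply (ex_series_incr_n a (S k0)) in Ha. exact Ha. }
  assert (a k0 <= sum_f_R0 a k0).
  { destruct k0. simpl; lra. simpl. assert (0 <= sum_f_R0 a k0) by (apply cond_pos_sum; auto). lra. }
  lra.
Qed.

Lemma Cmod_sq (z : C) : Cmod z ^ 2 = fst z ^ 2 + snd z ^ 2.
Proof. rewrite Cmod2_alt. reflexivity. Qed.

Lemma pt_bounds (p d : C) (t : R) : 0 < t ->
  let f := (p + d)%C in
  let re := Re (Cconj f * p)%C in
  let im := Im (Cconj f * p)%C in
  Rabs re <= 2 * Cmod p ^ 2 + Cmod d ^ 2 /\
  Rabs im <= Cmod p ^ 2 + Cmod d ^ 2 /\
  Cmod f ^ 2 <= 2 * Cmod p ^ 2 + 2 * Cmod d ^ 2 /\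
  re >= (1 - t/2) * Cmod p ^ 2 - / (2 * t) * Cmod d ^ 2 /\
  Cmod f ^ 2 <= (1 + t) * Cmod p ^ 2 + (1 + / t) * Cmod d ^ 2 /\
  Cmod f ^ 2 >= (1 - t) * Cmod p ^ 2 - / t * Cmod d ^ 2.
Proof.
  intros Ht f re im. unfold f, re, im. rewrite !Cmod_sq.
  destruct p as [p1 p2], d as [d1 d2]. simpl.
  assert (Hi : / t > 0) by (apply Rinv_0_lt_compat; lra).
  assert (Hti : t * / t = 1) by (field; lra).
  assert (Hi2 : / (2 * t) = / 2 * / t) by (field; lra).
  rewrite Hi2.
  assert (0 <= (d1+p1)^2) by apply pow2_ge_0. assert (0 <= (d1-p1)^2) by apply pow2_ge_0.
  assert (0 <= (d2+p2)^2) by apply pow2_ge_0. assert (0 <= (d2-p2)^2) by apply pow2_ge_0.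
  assert (0 <= (d1+p2)^2) by apply pow2_ge_0. assert (0 <= (d1-p2)^2) by apply pow2_ge_0.
  assert (0 <= (d2+p1)^2) by apply pow2_ge_0. assert (0 <= (d2-p1)^2) by apply pow2_ge_0.
  repeat split.
  - apply Rabs_le; split; nra.
  - apply Rabs_le; split; nra.
  - nra.
  - assert (0 <= (d1 + t * p1) ^ 2 + (d2 + t * p2) ^ 2) by (apply Rplus_le_le_0_compat; apply pow2_ge_0).
    assert (0 <= / t * ((d1 + t * p1) ^ 2 + (d2 + t * p2) ^ 2)) by nra. nra.
  - assert (0 <= (t * p1 - d1) ^ 2 + (t * p2 - d2) ^ 2) by (apply Rplus_le_le_0_compat; apply pow2_ge_0).
    assert (0 <= / t * ((t * p1 - d1) ^ 2 + (t * p2 - d2) ^ 2)) by nra. nra.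
  - assert (0 <= (t * p1 + d1) ^ 2 + (t * p2 + d2) ^ 2) by (apply Rplus_le_le_0_compat; apply pow2_ge_0).
    assert (0 <= / t * ((t * p1 + d1) ^ 2 + (t * p2 + d2) ^ 2)) by nra. nra.
Qed.

Lemma fid_main (psi phi : fvec) (t : R) :
  0 < t <= 1/8 ->
  ex_series (fun k => Cmod (psi k) ^ 2) ->
  0 < normsq psi ->
  ex_series (fun k => Cmod (phi k - psi k)%C ^ 2) ->
  Series (fun k => Cmod (phi k - psi k)%C ^ 2) <= t^2 * normsq psi ->
  fidelity psi phi >= 1 - 5*t.
Proof.
  intros Ht HexP HS HexD HSe.
  set (P := fun k => Cmod (psi k) ^ 2) in *.
  set (Dd := fun k => Cmod (phi k - psi k)%C ^ 2) in *.
  assert (Hf : forall k, phi k = (psi k + (phi k - psi k))%C) by (intros; ring).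
  assert (B : forall k,
    Rabs (Re (Cconj (phi k) * psi k)%C) <= 2 * P k + Dd k /\
    Rabs (Im (Cconj (phi k) * psi k)%C) <= P k + Dd k /\
    Cmod (phi k) ^ 2 <= 2 * P k + 2 * Dd k /\
    Re (Cconj (phi k) * psi k)%C >= (1 - t/2) * P k - / (2 * t) * Dd k /\
    Cmod (phi k) ^ 2 <= (1 + t) * P k + (1 + / t) * Dd k /\
    Cmod (phi k) ^ 2 >= (1 - t) * P k - / t * Dd k).
  { intros k. pose proof (pt_bounds (psi k) (phi k - psi k)%C t ltac:(lra)) as H. cbv zeta in H.
    rewrite <- Hf in H. exact H. }
  set (re := fun k => Re (Cconj (phi k) * psi k)%C).
  set (im := fun k => Im (Cconj (phi k) * psi k)%C).
  set (nphi := fun k => Cmod (phi k) ^ 2).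
  assert (exPD : ex_series (fun k => 2 * P k + Dd k)) by (apply exs_plus; [apply exs_scal|]; auto).
  assert (exre : ex_series re) by (apply (exs_le _ _ (fun k => proj1 (B k)) exPD)).
  assert (exim : ex_series im).
  { apply (exs_le _ (fun k => 2 * P k + Dd k)); [|auto]. intros k. destruct (B k) as [_ [H _]].
    assert (0 <= P k) by (apply pow2_ge_0). unfold im. lra. }
  assert (ex2 : ex_series (fun k => 2 * P k + 2 * Dd k)) by (apply exs_plus; apply exs_scal; auto).
  assert (exn : ex_series nphi).
  { apply (exs_le _ (fun k => 2 * P k + 2 * Dd k)); [|exact ex2]. intros k.
    unfold nphi. rewrite Rabs_pos_eq by apply pow2_ge_0. exact (proj1 (proj2 (proj2 (B k)))). }
  set (S := normsq psi) in *. set (Se := Series Dd) in *.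
  assert (HSdef : S = Series P) by reflexivity.
  assert (Se0 : 0 <= Se).
  { unfold Se. rewrite <- Series_zero. apply Series_le; auto. intros; split; [lra|apply pow2_ge_0]. }
  assert (HX : Series re >= (1 - t/2) * S - / (2 * t) * Se).
  { apply Rle_ge. rewrite HSdef. unfold Se. rewrite <- !Series_scal_l, <- Series_minus.
    2,3: apply exs_scal; auto.
    apply Series_le_gen; auto. apply exs_minus; apply exs_scal; auto.
    intros k. destruct (B k) as [_ [_ [_ [H _]]]]. unfold re. lra. }
  assert (HYu : Series nphi <= (1 + t) * S + (1 + / t) * Se).
  { rewrite HSdef. unfold Se. rewrite <- !Series_scal_l, <- Series_plus.
    2,3: apply exs_scal; auto.
    apply Series_le_gen; auto. apply exs_plus; apply exs_scal; auto.
    intros k. destruct (B k) as [_ [_ [_ [_ [H _]]]]]. unfold nphi. lra. }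
  assert (HYl : Series nphi >= (1 - t) * S - / t * Se).
  { apply Rle_ge. rewrite HSdef. unfold Se. rewrite <- !Series_scal_l, <- Series_minus.
    2,3: apply exs_scal; auto.
    apply Series_le_gen; auto. apply exs_minus; apply exs_scal; auto.
    intros k. destruct (B k) as [_ [_ [_ [_ [_ H]]]]]. unfold nphi. lra. }
  assert (Hti : t * / t = 1) by (field; lra).
  assert (Hit : 0 < / t) by (apply Rinv_0_lt_compat; lra).
  assert (E1 : / t * Se <= t * S).
  { apply Rle_trans with (/ t * (t ^ 2 * S)). apply Rmult_le_compat_l; lra. right. field. lra. }
  assert (E2 : / (2 * t) * Se = / 2 * (/ t * Se)) by (field; lra).
  set (X := Series re) in *. set (I := Series im) in *. set (Y := Series nphi) in *.
  assert (HX' : X >= (1 - t) * S) by lra.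
  assert (HY1 : Y <= (1 + 3 * t) * S).
  { assert (Se <= t * t * S) by (simpl in HSe; lra). nra. }
  assert (HY2 : Y > 0) by nra.
  unfold fidelity, inner, normsq. fold P. fold nphi re im. fold X I Y. fold S.
  rewrite Cmod_sq. simpl fst. simpl snd.
  apply Rle_ge. apply (Rmult_le_reg_r (Y * S)). nra.
  unfold Rdiv. rewrite Rmult_assoc, Rinv_l, Rmult_1_r by nra.
  assert (0 <= (1 - t) * S) by nra.
  assert (X ^ 2 >= ((1 - t) * S) ^ 2) by nra.
  assert (0 <= I ^ 2) by apply pow2_ge_0.
  assert ((1 - 5 * t) * (Y * S) <= (1 - 5 * t) * ((1 + 3 * t) * S * S)).
  { apply Rmult_le_compat_l. lra. apply Rmult_le_compat_r; lra. }
  assert ((1 - 5 * t) * ((1 + 3 * t) * S * S) <= ((1 - t) * S) ^ 2).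
  { assert (0 <= S * S) by nra. replace (((1 - t) * S) ^ 2) with ((1 - t) ^ 2 * (S * S)) by ring.
    replace ((1 - 5 * t) * ((1 + 3 * t) * S * S)) with ((1 - 5 * t) * (1 + 3 * t) * (S * S)) by ring.
    apply Rmult_le_compat_r; nra. }
  lra.
Qed.

Definition ee (b : C) (k : nat) : C := (RtoC (sc k) * b ^ k)%C.
Definition G (a : C) (h : R) (N : nat) (c : nat -> C) (k : nat) : C :=
  csum (fun i => c i * ee (a + RtoC (INR i * h)) k)%C N.
Definition w (a : C) (N k : nat) : R := (Cmod a + INR N) ^ k * sc k.

Lemma w_nonneg a N k : 0 <= w a N k.
Proof. unfold w. apply Rmult_le_pos. apply pow_le. pose proof (Cmod_ge_0 a); pose proof (pos_INR N); lra. left; apply sc_pos. Qed.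

Definition approx (a : C) (N : nat) (f : fvec) : Prop :=
  forall eps, 0 < eps -> exists h0, 0 < h0 /\ forall h, 0 < h < h0 ->
    exists c : nat -> C, forall k, Cmod (f k - G a h N c k)%C <= eps * w a N k.

Lemma G_add a h N c1 c2 k : G a h N (fun i => c1 i + c2 i)%C k = (G a h N c1 k + G a h N c2 k)%C.
Proof. unfold G. rewrite <- csum_add. apply csum_ext; intros; ring. Qed.
Lemma G_scal a h N c c1 k : G a h N (fun i => c * c1 i)%C k = (c * G a h N c1 k)%C.
Proof. unfold G. rewrite <- csum_scal. apply csum_ext; intros; ring. Qed.

Lemma approx_v a N j : (j < N)%nat -> approx a N (v a j).
Proof.
  intros Hj eps Heps.
  set (E := Ecoef a). assert (HE : 0 < E) by apply exp_pos.
  exists (Rmin 1 (eps / (E + 1))). split.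
  { apply Rmin_glb_lt. lra. apply Rdiv_lt_0_compat; lra. }
  intros h [Hh0 Hh1].
  assert (Hh1' : h < 1) by (eapply Rlt_le_trans; [exact Hh1| apply Rmin_l]).
  assert (Hh2 : h < eps / (E + 1)) by (eapply Rlt_le_trans; [exact Hh1| apply Rmin_r]).
  exists (fun i => RtoC (E / h ^ j) * (-1) ^ (j - i) * CN (binom j i))%C.
  intros k.
  assert (HG : G a h N (fun i => RtoC (E / h ^ j) * (-1) ^ (j - i) * CN (binom j i))%C k
               = (RtoC (E / h ^ j * sc k) * Pfd a h j k)%C).
  { unfold G, Pfd, D, ee. rewrite (csum_extend _ (S j) N) by (try lia; intros i Hi; rewrite binom_gt by lia; change (CN 0) with (RtoC 0); ring).
    rewrite <- csum_scal. apply csum_ext. intros i. rewrite (RtoC_mult (E / h ^ j) (sc k)). ring. }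
  rewrite HG.
  assert (Hhj : 0 < h ^ j) by (apply pow_lt; lra).
  assert (HeqC : (v a j k - RtoC (E / h ^ j * sc k) * Pfd a h j k)%C =
     (RtoC (- (E / h ^ j * sc k)) * (Pfd a h j k - CN (binom k j) * a ^ (k - j) * RtoC h ^ j * CN (fact j)))%C).
  { unfold v. fold E. rewrite ff_binom. unfold CN. rewrite mult_INR.
    rewrite RtoC_opp, !RtoC_mult. unfold Rdiv. rewrite RtoC_mult, RtoC_inv, RtoC_pow by lra.
    field. rewrite <- RtoC_pow. apply RtoC_neq0. lra. }
  rewrite HeqC, Cmod_mult, Cmod_R, Rabs_Ropp.
  pose proof (sc_pos k) as Hsc.
  rewrite Rabs_pos_eq by (apply Rmult_le_pos; [apply Rmult_le_pos; [lra| left; apply Rinv_0_lt_compat; lra]| lra]).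
  eapply Rle_trans. apply Rmult_le_compat_l.
  { apply Rmult_le_pos; [apply Rmult_le_pos; [lra| left; apply Rinv_0_lt_compat; lra]| lra]. }
  apply Pfd_err; lra.
  replace (E / h ^ j * sc k * (h ^ S j * (Cmod a + INR j) ^ k)) with ((E * h) * ((Cmod a + INR j) ^ k * sc k)).
  2:{ simpl. field. lra. }
  unfold w. apply Rmult_le_compat.
  - apply Rmult_le_pos; lra.
  - apply Rmult_le_pos; [apply pow_le; pose proof (Cmod_ge_0 a); pose proof (pos_INR j); lra| lra].
  - assert (E * h <= (E + 1) * h) by nra.
    assert ((E + 1) * h <= eps).
    { apply Rlt_le. apply (Rmult_lt_compat_l (E+1)) in Hh2; [|lra]. 
      replace ((E + 1) * (eps / (E + 1))) with eps in Hh2 by (field; lra). lra. }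
    lra.
  - apply Rmult_le_compat_r; [lra|]. apply pow_incr. split.
    pose proof (Cmod_ge_0 a); pose proof (pos_INR j); lra.
    apply Rplus_le_compat_l. apply le_INR. lia.
Qed.

Lemma approx_span a N f : span a N f -> approx a N f.
Proof.
  intros Hs; induction Hs.
  - intros eps Heps. exists 1. split. lra. intros h Hh. exists (fun _ => RtoC 0). intros k.
    unfold G. rewrite csum_zero by (intros; ring).
    replace (RtoC 0 - RtoC 0)%C with (RtoC 0) by ring. rewrite Cmod_0.
    apply Rmult_le_pos. lra. apply w_nonneg.
  - apply approx_v; auto.
  - intros eps Heps.
    destruct (IHHs1 (eps/2) ltac:(lra)) as [h1 [Hh1 A1]].
    destruct (IHHs2 (eps/2) ltac:(lra)) as [h2 [Hh2 A2]].
    exists (Rmin h1 h2). split. apply Rmin_glb_lt; lra.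
    intros h [H0 H1].
    destruct (A1 h) as [c1 Hc1]. split; [lra| eapply Rlt_le_trans; [exact H1| apply Rmin_l]].
    destruct (A2 h) as [c2 Hc2]. split; [lra| eapply Rlt_le_trans; [exact H1| apply Rmin_r]].
    exists (fun i => c1 i + c2 i)%C. intros k. rewrite G_add.
    replace (f k + g k - (G a h N c1 k + G a h N c2 k))%C with
      ((f k - G a h N c1 k) + (g k - G a h N c2 k))%C by ring.
    eapply Rle_trans. apply Cmod_triangle. specialize (Hc1 k). specialize (Hc2 k). lra.
  - intros eps Heps.
    assert (Hc0 : 0 < Cmod c + 1) by (pose proof (Cmod_ge_0 c); lra).
    destruct (IHHs (eps / (Cmod c + 1))) as [h1 [Hh1 A1]]. apply Rdiv_lt_0_compat; lra.
    exists h1. split; auto. intros h Hh. destruct (A1 h Hh) as [c1 Hc1].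
    exists (fun i => c * c1 i)%C. intros k. rewrite G_scal.
    replace (c * f k - c * G a h N c1 k)%C with (c * (f k - G a h N c1 k))%C by ring.
    rewrite Cmod_mult. specialize (Hc1 k).
    pose proof (w_nonneg a N k). pose proof (Cmod_ge_0 c).
    apply Rle_trans with (Cmod c * (eps / (Cmod c + 1) * w a N k)).
    apply Rmult_le_compat_l; auto.
    replace (Cmod c * (eps / (Cmod c + 1) * w a N k)) with ((Cmod c / (Cmod c + 1)) * (eps * w a N k)) by (field; lra).
    assert (Cmod c / (Cmod c + 1) <= 1).
    { apply (Rmult_le_reg_r (Cmod c + 1)). lra. unfold Rdiv. rewrite Rmult_assoc, Rinv_l by lra. lra. }
    assert (0 <= eps * w a N k) by (apply Rmult_le_pos; lra).
    nra.
Qed.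

Lemma G_bound a h N c k : 0 < h < 1 ->
  Cmod (G a h N c k) <= rsum (fun i => Cmod (c i)) N * w a N k.
Proof.
  intros Hh. unfold G. eapply Rle_trans. apply Cmod_csum.
  rewrite Rmult_comm, <- rsum_scal. apply rsum_le. intros i Hi.
  unfold ee, w. rewrite !Cmod_mult, Cmod_pow, Cmod_R, Rabs_pos_eq by (left; apply sc_pos).
  pose proof (sc_pos k). pose proof (Cmod_ge_0 (c i)).
  assert (Hb : Cmod (a + RtoC (INR i * h))%C <= Cmod a + INR N).
  { eapply Rle_trans. apply Cmod_triangle. rewrite Cmod_R, Rabs_pos_eq.
    2:{ apply Rmult_le_pos. apply pos_INR. lra. }
    apply Rplus_le_compat_l. assert (INR i <= INR N) by (apply le_INR; lia). pose proof (pos_INR i). nra. }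
  assert (Cmod (a + RtoC (INR i * h))%C ^ k <= (Cmod a + INR N) ^ k) by (apply pow_incr; split; [apply Cmod_ge_0| exact Hb]).
  assert (0 <= Cmod (a + RtoC (INR i * h))%C ^ k) by (apply pow_le, Cmod_ge_0).
  replace ((Cmod a + INR N) ^ k * sc k * Cmod (c i)) with (Cmod (c i) * (sc k * (Cmod a + INR N) ^ k)) by ring.
  apply Rmult_le_compat_l; auto. apply Rmult_le_compat_l; lra.
Qed.

Lemma approx_bounded a N f : approx a N f -> exists M, 0 <= M /\ forall k, Cmod (f k) <= M * w a N k.
Proof.
  intros H. destruct (H 1 ltac:(lra)) as [h0 [Hh0 A]].
  set (h := Rmin (h0/2) (1/2)).
  assert (Hh : 0 < h < h0 /\ h < 1).
  { unfold h. split; [split|].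
    apply Rmin_glb_lt; lra. eapply Rle_lt_trans. apply Rmin_l. lra. eapply Rle_lt_trans. apply Rmin_r. lra. }
  destruct (A h ltac:(lra)) as [c Hc].
  exists (1 + rsum (fun i => Cmod (c i)) N). split.
  { pose proof (rsum_nonneg (fun i => Cmod (c i)) N (fun i => Cmod_ge_0 _)). lra. }
  intros k. replace (f k) with ((f k - G a h N c k) + G a h N c k)%C by ring.
  eapply Rle_trans. apply Cmod_triangle. specialize (Hc k).
  pose proof (G_bound a h N c k ltac:(lra)). lra.
Qed.

Lemma w_series a N : ex_series (fun k => w a N k ^ 2).
Proof.
  pose proof (is_exp_Reals ((Cmod a + INR N) ^ 2)) as H.
  exists (exp ((Cmod a + INR N) ^ 2)). unfold is_pseries in H.
  eapply is_series_ext. 2: exact H. intros k.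
  rewrite pow_n_pow.
  assert (Hq : sqrt (INR (fact k)) <> 0) by (apply Rgt_not_eq, sqrt_lt_R0, lt_0_INR, lt_O_fact).
  assert (Hx : ((Cmod a + INR N) ^ 2) ^ k = ((Cmod a + INR N) ^ k) ^ 2) by (rewrite <- !pow_mult; f_equal; lia).
  assert (E : (((Cmod a + INR N) ^ k * / sqrt (INR (fact k))) ^ 2 = ((Cmod a + INR N) ^ 2) ^ k * / INR (fact k))%R).
  { rewrite Hx. rewrite <- (sqrt_sqrt (INR (fact k))) at 2 by apply pos_INR. field. auto. }
  unfold w, sc. exact (eq_sym E).
Qed.

Lemma fold_superpos_csum (g : nat -> C * C) k s m :
  fold_right (fun ca acc => (fst ca * coherent (snd ca) k + acc)%C) (RtoC 0) (map g (seq s m))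
  = csum (fun i => fst (g (s + i)%nat) * coherent (snd (g (s + i)%nat)) k)%C m.
Proof.
  revert s; induction m; intros s. reflexivity.
  simpl seq. simpl map. simpl fold_right. rewrite IHm. rewrite csum_shift. rewrite Nat.add_0_r.
  f_equal. apply csum_ext. intros i. rewrite Nat.add_succ_r. reflexivity.
Qed.

Lemma coherent_ee b k : (RtoC (exp (Cmod b ^ 2 / 2)) * coherent b k)%C = ee b k.
Proof.
  unfold coherent, ee, sc. rewrite pow_n_Cpow. unfold Cdiv.
  rewrite <- RtoC_inv by (apply Rgt_not_eq, sqrt_lt_R0, lt_0_INR, lt_O_fact).
  replace (RtoC (sc k)) with (RtoC (/ sqrt (INR (fact k)))) by reflexivity.
  replace (RtoC (exp (Cmod b ^ 2 / 2))) with (RtoC (/ exp (- (Cmod b ^ 2) / 2))).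
  2:{ f_equal. rewrite <- exp_Ropp. f_equal. field. }
  rewrite RtoC_inv by (apply Rgt_not_eq, exp_pos).
  field. apply RtoC_neq0. apply Rgt_not_eq, exp_pos.
Qed.

Lemma G_superpos a h N c : has_coherent_rank N (G a h N c).
Proof.
  set (g := fun i : nat => (c i * RtoC (exp (Cmod (a + RtoC (INR i * h)) ^ 2 / 2)), a + RtoC (INR i * h))%C).
  exists (map g (seq 0 N)). split. rewrite length_map, length_seq. reflexivity.
  apply functional_extensionality. intros k. unfold superpos. rewrite fold_superpos_csum.
  unfold G. apply csum_ext. intros i. unfold g. cbn [fst snd Nat.add]. rewrite <- coherent_ee. ring.
Qed.

From Stdlib Require Import Classical.

Theorem theorem3 (terms : list (C * list (nat * nat))) (n : nat) :
  (forall t, In t terms -> (n_creations (snd t) <= n)%nat) ->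
  approx_op_coherent_rank_le (S n) (op_of terms).
Proof.
  intros Hterms alpha. unfold approx_coherent_rank_le.
  set (f := op_of terms (coherent alpha)).
  assert (Ha : approx alpha (S n) f) by (apply approx_span, span_op; auto).
  destruct (classic (f = fun _ => RtoC 0)) as [Hz|Hnz]; [left; exact Hz| right].
  exists (S n). split; [lia|]. intros delta Hdelta.
  destruct (approx_bounded _ _ _ Ha) as [M [HM HMb]].
  set (wk := w alpha (S n)) in *.
  assert (exW : ex_series (fun k => wk k ^ 2)) by apply w_series.
  assert (exP : ex_series (fun k => Cmod (f k) ^ 2)).
  { apply (exs_le _ (fun k => M ^ 2 * wk k ^ 2)); [| apply exs_scal; auto].
    intros k. rewrite Rabs_pos_eq by apply pow2_ge_0.
    pose proof (HMb k). pose proof (Cmod_ge_0 (f k)).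
    replace (M ^ 2 * wk k ^ 2) with ((M * wk k) ^ 2) by ring. apply pow_incr. split; lra. }
  assert (HS : 0 < normsq f).
  { destruct (not_all_ex_not _ _ (fun H => Hnz (functional_extensionality _ _ H))) as [k0 Hk0].
    apply Rlt_le_trans with (Cmod (f k0) ^ 2).
    - apply pow_lt. apply Cmod_gt_0. exact Hk0.
    - unfold normsq. apply (Series_ge_term (fun k => Cmod (f k) ^ 2)); auto. intros; apply pow2_ge_0. }
  set (S0 := normsq f) in *.
  set (W := Series (fun k => wk k ^ 2)).
  assert (HW : 0 <= W).
  { unfold W. rewrite <- Series_zero. apply Series_le; auto. intros; split; [lra|apply pow2_ge_0]. }
  set (t := Rmin delta 1 / 8).
  assert (Ht : 0 < t <= 1/8).
  { unfold t. split. apply Rdiv_lt_0_compat. apply Rmin_glb_lt; lra. lra.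
    pose proof (Rmin_r delta 1). lra. }
  assert (Ht2 : 5 * t < delta).
  { unfold t. pose proof (Rmin_l delta 1). pose proof (Rmin_glb_lt delta 1 0 ltac:(lra) ltac:(lra)). lra. }
  assert (HSW : 0 < S0 / (W + 1)) by (apply Rdiv_lt_0_compat; lra).
  set (eps := t * sqrt (S0 / (W + 1))).
  assert (Heps : 0 < eps) by (apply Rmult_lt_0_compat; [lra| apply sqrt_lt_R0; auto]).
  assert (Heps2 : eps ^ 2 * W <= t ^ 2 * S0).
  { unfold eps. rewrite Rpow_mult_distr. rewrite pow2_sqrt by lra.
    assert (S0 / (W + 1) * W <= S0).
    { unfold Rdiv. replace (S0 * / (W + 1) * W) with (S0 * (W / (W + 1))) by (field; lra).
      assert (W / (W + 1) <= 1).
      { apply (Rmult_le_reg_r (W + 1)). lra. unfold Rdiv. rewrite Rmult_assoc, Rinv_l by lra. lra. }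
      assert (0 <= W / (W + 1)) by (apply Rdiv_le_0_compat; lra). nra. }
    assert (0 <= t ^ 2) by apply pow2_ge_0.
    replace (t ^ 2 * (S0 / (W + 1)) * W) with (t ^ 2 * (S0 / (W + 1) * W)) by ring.
    apply Rmult_le_compat_l; auto. }
  destruct (Ha eps Heps) as [h0 [Hh0 A]].
  destruct (A (h0 / 2) ltac:(lra)) as [c Hc].
  exists (G alpha (h0 / 2) (S n) c). split. apply G_superpos.
  set (phi := G alpha (h0 / 2) (S n) c) in *.
  assert (Hd : forall k, Cmod (phi k - f k)%C ^ 2 <= eps ^ 2 * wk k ^ 2).
  { intros k. replace (phi k - f k)%C with (- (f k - phi k))%C by ring. rewrite Cmod_opp.
    specialize (Hc k). pose proof (Cmod_ge_0 (f k - phi k)%C).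
    replace (eps ^ 2 * wk k ^ 2) with ((eps * wk k) ^ 2) by ring. apply pow_incr. unfold wk in *. split; lra. }
  assert (exD : ex_series (fun k => Cmod (phi k - f k)%C ^ 2)).
  { apply (exs_le _ (fun k => eps ^ 2 * wk k ^ 2)); [| apply exs_scal; auto].
    intros k. rewrite Rabs_pos_eq by apply pow2_ge_0. apply Hd. }
  assert (HSe : Series (fun k => Cmod (phi k - f k)%C ^ 2) <= t ^ 2 * S0).
  { apply Rle_trans with (Series (fun k => eps ^ 2 * wk k ^ 2)).
    apply Series_le. intros k; split; [apply pow2_ge_0| apply Hd]. apply exs_scal; auto.
    rewrite Series_scal_l. fold W. lra. }
  pose proof (fid_main f phi t Ht exP HS exD HSe). lra.
Qed.
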